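(* Let $n\ge 2$ and $1\le m\le n$ be integers, and let $\mathbf g_1,\dots,\mathbf g_n\in\mathbb R^d$ be arbitrary vectors (the per-example negative gradients $\mathbf g_i=-\nabla_{\mathbf w} f_i(\mathbf w)$ at a fixed parameter $\mathbf w$). Put $\mathbf g=\frac1n\sum_{i=1}^n \mathbf g_i$ and assume $\mathbf g\neq 0$. Let $\mathbb I$ be a subset of $\{1,\dots,n\}$ of size $m$ drawn uniformly at random among all $\binom nm$ such subsets, and let $\hat{\mathbf g}=\frac1m\sum_{i\in\mathbb I}\mathbf g_i$. Let $\gamma=\max_{i,j\in\{1,\dots,n\}}|\langle \mathbf g_i,\mathbf g_j\rangle|$. Then $$0\le \mathbb E\|\hat{\mathbf g}\|-\|\mathbf g\|\le \frac{2(n-m)}{m(n-1)}\cdot\frac{\gamma}{\mathbb E\|\hat{\mathbf g}\|+\|\mathbf g\|}\le \frac{(n-m)\gamma}{m(n-1)\|\mathbf g\|},$$ $$\mathrm{Var}(\|\hat{\mathbf g}\|)\le \frac{2(n-m)}{m(n-1)}\gamma,$$ and consequently $$\frac{\sqrt{\mathrm{Var}(\|\hat{\mathbf g}\|)}}{\mathbb E\|\hat{\mathbf g}\|}\le\sqrt{\frac{2(n-m)}{m(n-1)}\cdot\frac{\gamma}{\|\mathbf g\|^2}}.$$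
   Context: $\|\cdot\|$ is the Euclidean norm and $\langle\cdot,\cdot\rangle$ the Euclidean inner product on $\mathbb R^d$. Expectation and variance are over the random choice of $\mathbb I$. *)

(* Defs.v *)
(* the statement is purely algebraic (sums, square roots,
   order), so it is stated for an arbitrary real closed field R (which
   includes the real numbers). *)
From HB Require Import structures.
From mathcomp Require Import all_boot all_order all_algebra.
Set Implicit Arguments. Unset Strict Implicit. Unset Printing Implicit Defensive.
Import Order.TTheory GRing.Theory Num.Theory.
Local Open Scope ring_scope.

Section Defs.
Variable R : rcfType.

Definition dotp (d : nat) (u v : 'rV[R]_d) : R := \sum_(k < d) u 0 k * v 0 k.
Definition enorm (d : nat) (u : 'rV[R]_d) : R := Num.sqrt (dotp u u).

Definition gmean (d n : nat) (g : 'I_n -> 'rV[R]_d) : 'rV[R]_d :=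
  (n%:R)^-1 *: \sum_(i < n) g i.

Definition gbatch (d n m : nat) (g : 'I_n -> 'rV[R]_d) (I : {set 'I_n}) : 'rV[R]_d :=
  (m%:R)^-1 *: \sum_(i in I) g i.

Definition Exp (n m : nat) (f : {set 'I_n} -> R) : R :=
  ('C(n, m)%:R)^-1 * \sum_(I : {set 'I_n} | #|I| == m) f I.

Definition Var (n m : nat) (f : {set 'I_n} -> R) : R :=
  @Exp n m (fun I => (f I - @Exp n m f) ^+ 2).

Definition gammaG (d n : nat) (g : 'I_n -> 'rV[R]_d) : R :=
  \big[Num.max/0]_(ij : 'I_n * 'I_n) `|dotp (g ij.1) (g ij.2)|.

End Defs.
Arguments Exp {R} n m f.
Arguments Var {R} n m f.

(* Main.v *)
Require Import Defs.
From HB Require Import structures.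
From mathcomp Require Import all_boot all_order all_algebra.
From mathcomp Require Import zify ring lra.
Import Order.TTheory GRing.Theory Num.Theory.
Local Open Scope ring_scope.


Lemma count_sup (n m : nat) (J : {set 'I_n}) : (#|J| <= m)%N ->
  #|[set I : {set 'I_n} | (J \subset I) && (#|I| == m)]| = 'C(n - #|J|, m - #|J|).
Proof.
move=> hJ.
have hC : #|~: J| = (n - #|J|)%N by have := cardsC J; rewrite card_ord; lia.
rewrite -hC -cards_draws.
rewrite -(@card_in_imset _ _ (fun B => B :|: J) [set A : {set 'I_n} | A \subset ~: J & #|A| == (m - #|J|)%N]).
  apply: eq_card => I; rewrite !inE; apply/andP/imsetP.
    case=> sJI /eqP cI; exists (I :\: J).
      rewrite inE; apply/andP; split; first by rewrite setDE subsetIr.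
      by rewrite cardsD (setIidPr sJI) cI.
    apply/setP => x; rewrite !inE; case xJ: (x \in J); rewrite ?orbT ?orbF //=.
    by rewrite (subsetP sJI).
  case=> B; rewrite inE => /andP [sBJ /eqP cB] ->; split; first by rewrite subsetUr.
  rewrite cardsU cB.
  have -> : B :&: J = set0.
    by apply/setP => x; rewrite !inE; apply/negbTE/andP => -[/(subsetP sBJ)]; rewrite inE => /negbTE ->.
  by rewrite cards0; apply/eqP; lia.
move=> B1 B2; rewrite !inE => /andP[s1 _] /andP[s2 _] e.
have h1 : B1 = (B1 :|: J) :\: J by rewrite setDUl setDv setU0; apply/esym/setDidPl; rewrite disjoints_subset.
have h2 : B2 = (B2 :|: J) :\: J by rewrite setDUl setDv setU0; apply/esym/setDidPl; rewrite disjoints_subset.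
by rewrite h1 h2 /= e.
Qed.

Lemma count_sup0 (n m : nat) (J : {set 'I_n}) : (m < #|J|)%N ->
  #|[set I : {set 'I_n} | (J \subset I) && (#|I| == m)]| = 0%N.
Proof.
move=> hJ; apply/eqP; rewrite cards_eq0; apply/eqP/setP => I; rewrite !inE.
apply/negbTE/andP => -[sJ /eqP cI]; have := subset_leq_card sJ; lia.
Qed.

Section S.

Variable R : rcfType.

Lemma sum_sets1 (n m : nat) (F : 'I_n -> R) :
  \sum_(I : {set 'I_n} | #|I| == m) \sum_(i in I) F i =
  \sum_i F i * (#|[set I : {set 'I_n} | ([set i] \subset I) && (#|I| == m)]|)%:R.
Proof.
under eq_bigr do rewrite big_mkcond /=.
rewrite exchange_big /=; apply: eq_bigr => i _.
rewrite -big_mkcondr /= sumr_const mulr_natr; congr (_ *+ _).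
by apply: eq_card => I; rewrite !inE sub1set andbC.
Qed.

Lemma sum_sets2 (n m : nat) (F : 'I_n -> 'I_n -> R) :
  \sum_(I : {set 'I_n} | #|I| == m) \sum_(i in I) \sum_(j in I) F i j =
  \sum_i \sum_j F i j * (#|[set I : {set 'I_n} | ([set i; j] \subset I) && (#|I| == m)]|)%:R.
Proof.
under eq_bigr do rewrite big_mkcond /=.
rewrite exchange_big /=; apply: eq_bigr => i _.
rewrite -big_mkcondr /=.
under eq_bigr do rewrite big_mkcond /=.
rewrite exchange_big /=; apply: eq_bigr => j _.
rewrite -big_mkcondr /= sumr_const mulr_natr; congr (_ *+ _).
by apply: eq_card => I; rewrite !inE subUset !sub1set andbC andbA.
Qed.

Lemma cntN1 (n m : nat) (i : 'I_n) : (1 <= m)%N -> (m <= n)%N ->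
  n%:R * (#|[set I : {set 'I_n} | ([set i] \subset I) && (#|I| == m)]|)%:R
   = m%:R * ('C(n, m))%:R :> R.
Proof.
move=> m1 mn; rewrite count_sup cards1 // -!natrM; congr (_%:R).
case: m m1 mn => // k _ _; rewrite !subn1 /=; exact: mul_bin_diag.
Qed.

Lemma cntN2 (n m : nat) (i j : 'I_n) : i != j -> (1 <= m)%N -> (m <= n)%N ->
  n%:R * (n%:R - 1) * (#|[set I : {set 'I_n} | ([set i; j] \subset I) && (#|I| == m)]|)%:R
   = m%:R * (m%:R - 1) * ('C(n, m))%:R :> R.
Proof.
move=> ij m1 mn.
case: m m1 mn => // [[|k]] _ mn.
  by rewrite count_sup0 ?cards2 ?ij // subrr !mulr0 mul0r.
have n1 : (1 <= n)%N by lia.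
rewrite count_sup cards2 ij //.
have ek : (k.+2%:R - 1 = k.+1%:R :> R) by rewrite -addn1 natrD addrK.
rewrite -(natrB _ n1) ek -!natrM /=; congr (_%:R).
have e1 := mul_bin_diag n.-1 k.
have e2 := mul_bin_diag n k.+1.
rewrite !subn1 subn2 /= subSS subn1 /= -mulnA e1 mulnCA e2.
by rewrite mulnA (mulnC k.+1).
Qed.

Lemma dotpC d (u v : 'rV[R]_d) : dotp u v = dotp v u.
Proof. by rewrite /dotp; apply: eq_bigr => k _; rewrite mulrC. Qed.

Lemma dotpZl d a (u v : 'rV[R]_d) : dotp (a *: u) v = a * dotp u v.
Proof. by rewrite /dotp mulr_sumr; apply: eq_bigr => k _; rewrite mxE mulrA. Qed.

Lemma dotp_suml d (I : finType) (P : pred I) (u : I -> 'rV[R]_d) v :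
  dotp (\sum_(i | P i) u i) v = \sum_(i | P i) dotp (u i) v.
Proof.
rewrite /dotp exchange_big; apply: eq_bigr => k _; rewrite summxE mulr_suml //.
Qed.

Lemma dotp_ge0 d (u : 'rV[R]_d) : 0 <= dotp u u.
Proof. by apply: sumr_ge0 => k _; rewrite -expr2 sqr_ge0. Qed.

Lemma dotp_gt0 d (u : 'rV[R]_d) : u != 0 -> 0 < dotp u u.
Proof.
move=> nu; rewrite lt_def dotp_ge0 andbT; apply: contra nu => /eqP h.
apply/eqP/matrixP => i k; rewrite ord1 mxE.
have hk := psumr_eq0P (P:=xpredT) (F:= fun k => u 0 k * u 0 k)
  (fun k _ => ltac:(by rewrite /= -expr2 sqr_ge0)) h (i:=k) isT.
by move/eqP: hk; rewrite mulf_eq0 orbb => /eqP.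
Qed.

Lemma lagrange d (u v : 'rV[R]_d) :
  \sum_k \sum_l (u 0 k * v 0 l - u 0 l * v 0 k) ^+ 2
  = 2 * (dotp u u * dotp v v - dotp u v ^+ 2).
Proof.
have eA : dotp u u * dotp v v = \sum_k \sum_l (u 0 k * u 0 k) * (v 0 l * v 0 l).
  by rewrite /dotp mulr_suml; apply: eq_bigr => k _; rewrite mulr_sumr.
have eA' : dotp u u * dotp v v = \sum_k \sum_l (u 0 l * u 0 l) * (v 0 k * v 0 k).
  by rewrite eA exchange_big.
have eB : dotp u v ^+ 2 = \sum_k \sum_l (u 0 k * v 0 k) * (u 0 l * v 0 l).
  by rewrite expr2 /dotp mulr_suml; apply: eq_bigr => k _; rewrite mulr_sumr.
have -> : 2 * (dotp u u * dotp v v - dotp u v ^+ 2) =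
   dotp u u * dotp v v + dotp u u * dotp v v - 2 * dotp u v ^+ 2 by ring.
rewrite {1}eA eA' eB -big_split /= mulr_sumr -sumrB; apply: eq_bigr => k _.
rewrite -big_split mulr_sumr -sumrB; apply: eq_bigr => l _ /=; ring.
Qed.

Lemma CS d (u v : 'rV[R]_d) : dotp u v <= enorm u * enorm v.
Proof.
have h : dotp u v ^+ 2 <= dotp u u * dotp v v.
  rewrite -subr_ge0 -(@pmulr_rge0 _ 2) // -lagrange.
  by apply: sumr_ge0 => k _; apply: sumr_ge0 => l _; rewrite sqr_ge0.
apply: (le_trans (ler_norm _)).
rewrite /enorm -sqrtrM ?dotp_ge0 // -sqrtr_sqr; exact: ler_wsqrtr.
Qed.

Lemma gamma_ge0 d n (g : 'I_n -> 'rV[R]_d) : 0 <= gammaG g.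
Proof.
rewrite /gammaG; apply: (big_ind (fun x => 0 <= x)) => //.
  by move=> x y hx hy; rewrite le_max hx.
Qed.

Lemma gamma_ge d n (g : 'I_n -> 'rV[R]_d) i j : `|dotp (g i) (g j)| <= gammaG g.
Proof. exact: (le_bigmax _ (fun ij : 'I_n * 'I_n => `|dotp (g ij.1) (g ij.2)|) (i, j)). Qed.

Lemma sum_const_sets n m (c : R) :
  \sum_(I : {set 'I_n} | #|I| == m) c = c * ('C(n, m))%:R.
Proof.
rewrite (eq_bigl (fun I => I \in [set I : {set 'I_n} | #|I| == m])); last by move=> I; rewrite inE.
by rewrite sumr_const card_draws card_ord mulr_natr.
Qed.

Lemma sum_diag n (h : 'I_n -> 'I_n -> R) a b :
  \sum_i \sum_j h i j * (if i == j then a else b)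
  = b * \sum_i \sum_j h i j + (a - b) * \sum_i h i i.
Proof.
rewrite mulr_sumr mulr_sumr -big_split; apply: eq_bigr => i _ /=.
rewrite mulr_sumr (bigD1 i) //= eqxx [X in _ = X + _](bigD1 i) //=.
rewrite (eq_bigr (fun j => b * h i j)); last first.
  by move=> j /negbTE; rewrite eq_sym => ->; rewrite mulrC.
ring.
Qed.

Lemma dotp_sums d n (g : 'I_n -> 'rV[R]_d) (a : R) (P : pred 'I_n) :
  dotp (a *: \sum_(i | P i) g i) (a *: \sum_(i | P i) g i)
  = a * (a * \sum_(i | P i) \sum_(j | P j) dotp (g i) (g j)).
Proof.
rewrite dotpZl dotp_suml; congr (_ * _); rewrite mulr_sumr; apply: eq_bigr => i _.
rewrite dotpC dotpZl dotp_suml; congr (_ * _); apply: eq_bigr => j _; exact: dotpC.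
Qed.
End S.

Theorem theorem1 (R : rcfType) (d n m : nat) (g : 'I_n -> 'rV[R]_d) :
  (2 <= n)%N -> (1 <= m)%N -> (m <= n)%N -> gmean g != 0 ->
  let EN := Exp n m (fun I => enorm (gbatch m g I)) in
  let VN := Var n m (fun I => enorm (gbatch m g I)) in
  let nG := enorm (gmean g) in
  let c := 2 * (n - m)%N%:R / (m%:R * (n.-1)%:R) in
  [/\ 0 <= EN - nG,
      EN - nG <= c * (gammaG g / (EN + nG)),
      c * (gammaG g / (EN + nG)) <= (n - m)%N%:R * gammaG g / (m%:R * (n.-1)%:R * nG),
      VN <= c * gammaG g
    & Num.sqrt VN / EN <= Num.sqrt (c * (gammaG g / nG ^+ 2))].
Proof.
move=> n2 m1 mn Gnz EN VN nG c.
have n0 : (0 < n)%N by lia.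
pose C : R := ('C(n, m))%:R.
have Cpos : 0 < C by rewrite ltr0n bin_gt0.
have C0 : C != 0 by rewrite gt_eqF.
have nr0 : (n%:R : R) != 0 by rewrite pnatr_eq0 -lt0n.
have mr0 : (m%:R : R) != 0 by rewrite pnatr_eq0 -lt0n.
have en1 : ((n.-1)%:R : R) = n%:R - 1 by rewrite -subn1 natrB.
have n1r0 : (n%:R - 1 : R) != 0 by rewrite -en1 pnatr_eq0; lia.
have enm : ((n - m)%N%:R : R) = n%:R - m%:R by rewrite natrB.
pose dGG := dotp (gmean g) (gmean g).
have dGGpos : 0 < dGG by exact: dotp_gt0.
have nGpos : 0 < nG by rewrite sqrtr_gt0.
have nG2 : nG ^+ 2 = dGG by rewrite sqr_sqrtr // ltW.
pose gam := gammaG g.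
have gam0 : 0 <= gam by exact: gamma_ge0.
pose k : R := (n - m)%N%:R / (m%:R * (n.-1)%:R).
have k0 : 0 <= k by rewrite divr_ge0 // mulr_ge0.
have ck : c = 2 * k by rewrite /c /k mulrA.
have N1e : forall i : 'I_n, (#|[set I : {set 'I_n} | ([set i] \subset I) && (#|I| == m)]|)%:R
    = m%:R * C / n%:R :> R.
  move=> i; apply: (mulfI nr0); rewrite cntN1 //; field; exact: nr0.
have K1 : \sum_(I : {set 'I_n} | #|I| == m) dotp (gbatch m g I) (gmean g) = C * dGG.
  under eq_bigr do rewrite /gbatch dotpZl dotp_suml.
  rewrite -mulr_sumr sum_sets1.
  under eq_bigr do rewrite N1e.
  rewrite -mulr_suml /dGG {3}/gmean dotpZl dotp_suml.
  field; by rewrite nr0 mr0.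
pose a : R := m%:R * C / n%:R.
pose b : R := m%:R * (m%:R - 1) * C / (n%:R * (n%:R - 1)).
have N2e : forall i j : 'I_n,
    (#|[set I : {set 'I_n} | ([set i; j] \subset I) && (#|I| == m)]|)%:R
    = if i == j then a else b.
  move=> i j; case: eqVneq => [<-|ij]; first by rewrite setUid N1e.
  have h0 : (n%:R * (n%:R - 1) : R) != 0 by rewrite mulf_neq0.
  apply: (mulfI h0); rewrite cntN2 // /b; field; by rewrite nr0 n1r0.
pose h := fun i j : 'I_n => dotp (g i) (g j).
pose T := \sum_i \sum_j h i j.
pose D := \sum_i h i i.
have eG : dGG = n%:R^-1 * (n%:R^-1 * T) by rewrite /dGG /gmean dotp_sums.
have K2 : \sum_(I : {set 'I_n} | #|I| == m) dotp (gbatch m g I) (gbatch m g I)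
    = m%:R^-1 * (m%:R^-1 * (b * T + (a - b) * D)).
  under eq_bigr do rewrite /gbatch dotp_sums.
  rewrite -mulr_sumr -mulr_sumr sum_sets2.
  under eq_bigr do under eq_bigr do rewrite N2e.
  by rewrite sum_diag.
pose Q := C^-1 * \sum_(I : {set 'I_n} | #|I| == m) dotp (gbatch m g I) (gbatch m g I).
have KQ : Q - dGG = k * (D / n%:R - dGG).
  rewrite /Q K2 eG /k /a /b en1 enm.
  field; by rewrite nr0 mr0 n1r0 C0.
have Dle : D <= n%:R * gam.
  apply: (@le_trans _ _ (\sum_(i < n) gam)).
    by apply: ler_sum => i _; apply: le_trans (ler_norm _) (@gamma_ge _ _ _ g i i).
  by rewrite sumr_const card_ord mulr_natl.
have Qle : Q - dGG <= k * gam.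
  rewrite KQ; apply: ler_wpM2l => //.
  have : D / n%:R <= gam by rewrite ler_pdivrMr ?ltr0n // mulrC.
  have := ltW dGGpos; lra.
(* Jensen *)
have ENnG : nG <= EN.
  rewrite -(ler_pM2r nGpos) -expr2 nG2 -[dGG](mulKf C0) -K1 /EN /Exp.
  rewrite -mulrA mulr_suml; apply: ler_wpM2l; first by rewrite invr_ge0 ltW.
  by apply: ler_sum => I _; apply: CS.
pose S1 := \sum_(I : {set 'I_n} | #|I| == m) enorm (gbatch m g I).
have eEN : EN = C^-1 * S1 by [].
have sq : forall I, (enorm (gbatch m g I) - EN) ^+ 2 =
    dotp (gbatch m g I) (gbatch m g I) - 2 * EN * enorm (gbatch m g I) + EN ^+ 2.
  by move=> I; rewrite sqrrB {1}/enorm sqr_sqrtr ?dotp_ge0 //; ring.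
have VNe : VN = Q - EN ^+ 2.
  rewrite /VN /Var /Exp -/EN.
  under eq_bigr do rewrite sq.
  rewrite big_split /= sumrB -mulr_sumr sum_const_sets -/S1 /Q -/C eEN.
  field; exact: C0.
have VN0 : 0 <= VN.
  rewrite /VN /Var /Exp; apply: mulr_ge0; first by rewrite invr_ge0 ler0n.
  by apply: sumr_ge0 => I _; rewrite sqr_ge0.
have ENpos : 0 < EN by apply: lt_le_trans ENnG.
pose kg := k * gam.
have kg0 : 0 <= kg by rewrite mulr_ge0.
have EN2 : nG ^+ 2 <= EN ^+ 2 by rewrite lerXn2r // ?nnegrE ltW.
have Hmain : EN ^+ 2 - nG ^+ 2 <= kg.
  move: Qle VN0 EN2; rewrite VNe nG2 -/kg.
  move=> h1 h2 _; apply: le_trans h1; rewrite lerD2r -subr_ge0 //.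
have ENnG0 : 0 < EN + nG by rewrite addr_gt0.
have cg : c * gam = 2 * kg by rewrite ck /kg mulrA.
have VNle : VN <= c * gam.
  by rewrite cg; move: Qle EN2 VN0 kg0; rewrite VNe nG2 -/kg; lra.
have cg0 : 0 <= c * gam by rewrite cg mulr_ge0.
split.
- by rewrite subr_ge0.
- rewrite mulrA cg ler_pdivlMr //.
  have -> : (EN - nG) * (EN + nG) = EN ^+ 2 - nG ^+ 2 by ring.
  lra.
- rewrite -subr_ge0.
  have -> : (n - m)%N%:R * gammaG g / (m%:R * n.-1%:R * nG) - c * (gammaG g / (EN + nG))
      = kg * (EN - nG) / (nG * (EN + nG)).
    rewrite ck /kg /k /gam en1; field.
    by rewrite mr0 n1r0 (gt_eqF nGpos) (gt_eqF ENnG0).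
  apply: divr_ge0; first by apply: mulr_ge0 => //; rewrite subr_ge0.
  by apply: mulr_ge0; apply: ltW.
- exact: VNle.
have nG20 : 0 < nG ^+ 2 by rewrite exprn_gt0.
have X0 : 0 <= c * (gam / nG ^+ 2).
  by rewrite mulrA; apply: divr_ge0 => //; apply: ltW.
rewrite ler_pdivrMr //.
have -> : Num.sqrt (c * (gammaG g / nG ^+ 2)) * EN
    = Num.sqrt (c * (gam / nG ^+ 2) * EN ^+ 2).
  by rewrite [RHS]sqrtrM // sqrtr_sqr ger0_norm // ltW.
apply: ler_wsqrtr; apply: (le_trans VNle).
rewrite (_ : c * (gam / nG ^+ 2) * EN ^+ 2 = c * gam * (EN ^+ 2 / nG ^+ 2)); last by ring.
apply: ler_peMr => //.
by rewrite ler_pdivlMr // mul1r.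
Qed.
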